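(* For all $\xi,\xi^*>0$ and $\eta\in(0,\infty)^p$, $$\big|\alpha_\eta(\xi,\xi^* )-\alpha_{\eta,\epsilon}(\xi,\xi^* )\big|\le \exp\Big\{\Big(N+(N+a_0)\frac{\|z\|^2}{b_0}\Big)\|W\|^2\delta\Big\}-1 .$$ In particular $\sup_{\xi,\xi^*,\eta}|\alpha_\eta(\xi,\xi^* )-\alpha_{\eta,\epsilon}(\xi,\xi^* )|=O(\delta)$ as $\delta\to0$, with constant depending only on $N,a_0,b_0,W,z$.
   Context: Fix $N,p\ge1$, $W\in\mathbb R^{N\times p}$, $z\in\mathbb R^N$, $a_0,b_0>0$, $\delta>0$; $\|\cdot\|$ is the Euclidean/operator norm. Let $\pi_\xi(t)\propto t^{-1/2}(1+t)^{-1}$. For $\eta\in(0,\infty)^p$ let $D=\mathrm{diag}(\eta_j^{-1})$. For $\xi,\xi^*>0$ let $\xi_{\max}^{-1}=\max\{\xi^{-1},(\xi^* )^{-1}\}$ and $D_\delta=\mathrm{diag}(\eta_j^{-1}\mathbf 1(\xi^{-1}_{\max}\eta_j^{-1}>\delta))$. For $t\in\{\xi,\xi^*\}$ let $M_t=I_N+t^{-1}WDW'$ and $M_{t,\delta}=I_N+t^{-1}WD_\delta W'$. Define $q_\eta(\xi,\xi^* )=\frac{|M_{\xi^*}|^{-1/2}(b_0+z'M_{\xi^*}^{-1}z)^{-(N+a_0)/2}}{|M_{\xi}|^{-1/2}(b_0+z'M_{\xi}^{-1}z)^{-(N+a_0)/2}}\cdot\frac{\pi_\xi(\xi^* )\,\xi^*}{\pi_\xi(\xi)\,\xi}$,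 let $q_{\eta,\delta}$ be the same expression with $M_t$ replaced by $M_{t,\delta}$, and set $\alpha_\eta=\min\{1,q_\eta\}$, $\alpha_{\eta,\epsilon}=\min\{1,q_{\eta,\delta}\}$. *)

(* Defs.v *)
From HB Require Import structures.
From Stdlib Require Import Reals Lra ClassicalEpsilon FunctionalExtensionality.
From mathcomp Require Import all_boot all_algebra.

Set Implicit Arguments.
Unset Strict Implicit.
Unset Printing Implicit Defensive.

Definition R_eqb (x y : R) : bool := if Req_EM_T x y then true else false.

Lemma R_eqP : Equality.axiom R_eqb.
Proof. move=> x y; rewrite /R_eqb; case: (Req_EM_T x y) => h; by constructor. Qed.

HB.instance Definition _ := hasDecEq.Build R R_eqP.

Definition R_find (P : pred R) (n : nat) : option R :=
  match excluded_middle_informative (exists x, P x) with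
  | left h => Some (proj1_sig (constructive_indefinite_description _ h))
  | right _ => None
  end.

Lemma R_find_correct P n x : R_find P n = Some x -> P x.
Proof.
rewrite /R_find; case: excluded_middle_informative => // h [<-].
exact: proj2_sig (constructive_indefinite_description _ h).
Qed.

Lemma R_find_complete (P : pred R) : (exists x, P x) -> exists n, R_find P n.
Proof. move=> h; exists 0%N; rewrite /R_find; by case: excluded_middle_informative. Qed.

Lemma R_find_ext (P Q : pred R) : P =1 Q -> R_find P =1 R_find Q.
Proof.
move=> e; have -> : P = Q by apply: functional_extensionality.
by [].
Qed.

HB.instance Definition _ :=
  hasChoice.Build R R_find_correct R_find_complete R_find_ext.

Lemma R_addA : associative Rplus.
Proof. by move=> x y z; rewrite Rplus_assoc. Qed.
Lemma R_mulA : associative Rmult.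
Proof. by move=> x y z; rewrite Rmult_assoc. Qed.

HB.instance Definition _ :=
  GRing.isZmodule.Build R R_addA Rplus_comm Rplus_0_l Rplus_opp_l.

Lemma R1_neq0_bool : (R1 : R) != (R0 : R).
Proof. by apply/R_eqP; exact: R1_neq_R0. Qed.

HB.instance Definition _ :=
  GRing.Zmodule_isComNzRing.Build R R_mulA Rmult_comm Rmult_1_l
    Rmult_plus_distr_r R1_neq0_bool.

Lemma R_mulVf (x : R) : x != R0 -> Rmult (Rinv x) x = R1.
Proof. by move/R_eqP=> h; rewrite Rmult_comm; apply: Rinv_r. Qed.

HB.instance Definition _ := GRing.ComNzRing_isField.Build R R_mulVf Rinv_0.

Local Open Scope R_scope.

Definition qform {n : nat} (A : 'M[R]_n) (x : 'cV[R]_n) : R :=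
  ((x^T *m A *m x)%R ord0 ord0).

Definition Dmat {p : nat} (eta : 'I_p -> R) : 'M[R]_p :=
  \matrix_(i < p, j < p) (if i == j then Rinv (eta i) else 0).

Definition ximax_inv (xi xis : R) : R := Rmax (Rinv xi) (Rinv xis).

Definition Dmat_delta {p : nat} (delta xi xis : R) (eta : 'I_p -> R) : 'M[R]_p :=
  \matrix_(i < p, j < p)
    (if i == j then
       (if Rlt_dec delta (Rmult (ximax_inv xi xis) (Rinv (eta i)))
        then Rinv (eta i) else 0)
     else 0).

Definition Mmat {N p : nat} (W : 'M[R]_(N, p)) (D : 'M[R]_p) (t : R) : 'M[R]_N :=
  (1%:M + (Rinv t) *: (W *m D *m W^T))%R.

(* unnormalised prior density pi_xi(t) = t^{-1/2} (1+t)^{-1};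
   the normalising constant cancels in q *)
Definition pi_xi (t : R) : R := Rinv (sqrt t) * Rinv (1 + t).

Definition lik {N : nat} (a0 b0 : R) (z : 'cV[R]_N) (M : 'M[R]_N) : R :=
  Rpower (\det M)%R (- / 2) *
  Rpower (b0 + qform (invmx M) z) (- ((INR N + a0) / 2)).

Definition q_of {N p : nat} (a0 b0 : R) (W : 'M[R]_(N, p)) (z : 'cV[R]_N)
    (D : 'M[R]_p) (xi xis : R) : R :=
  (lik a0 b0 z (Mmat W D xis) / lik a0 b0 z (Mmat W D xi)) *
  ((pi_xi xis * xis) / (pi_xi xi * xi)).

Definition q_eta {N p : nat} (a0 b0 : R) (W : 'M[R]_(N, p)) (z : 'cV[R]_N)
    (eta : 'I_p -> R) (xi xis : R) : R :=
  q_of a0 b0 W z (Dmat eta) xi xis.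

Definition q_eta_delta {N p : nat} (a0 b0 delta : R) (W : 'M[R]_(N, p))
    (z : 'cV[R]_N) (eta : 'I_p -> R) (xi xis : R) : R :=
  q_of a0 b0 W z (Dmat_delta delta xi xis eta) xi xis.

Definition alpha_eta {N p : nat} (a0 b0 : R) (W : 'M[R]_(N, p)) (z : 'cV[R]_N)
    (eta : 'I_p -> R) (xi xis : R) : R :=
  Rmin 1 (q_eta a0 b0 W z eta xi xis).

Definition alpha_eta_eps {N p : nat} (a0 b0 delta : R) (W : 'M[R]_(N, p))
    (z : 'cV[R]_N) (eta : 'I_p -> R) (xi xis : R) : R :=
  Rmin 1 (q_eta_delta a0 b0 delta W z eta xi xis).

Definition sqnorm {N : nat} (z : 'cV[R]_N) : R := (z^T *m z)%R ord0 ord0.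

Definition opnorm2 {N p : nat} (W : 'M[R]_(N, p)) : R :=
  match excluded_middle_informative
          (exists L, is_lub (fun v => exists x : 'cV[R]_p,
                                 Rle (sqnorm x) 1 /\ v = sqnorm (W *m x)%R) L) with
  | left h => proj1_sig (constructive_indefinite_description _ h)
  | right _ => 0
  end.

(* Main.v *)
Require Import Defs.
From HB Require Import structures.
From Stdlib Require Import Reals Lra Psatz ClassicalEpsilon.
From mathcomp Require Import all_boot all_algebra.
Import GRing.Theory.
Local Open Scope ring_scope.
Lemma det_rank1 (n : nat) (a : 'cV[R]_n) (b : 'rV[R]_n) :
  \det (1%:M + a *m b) = 1 + (b *m a) 0 0.
Proof.
have E1 : block_mx (1%:M : 'M_n) 0 b (1%:M : 'M_1) *m block_mx 1%:M (-a) 0 (1%:M + b *m a)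
   = block_mx 1%:M (-a) b 1%:M.
  rewrite mulmx_block !mul1mx !mul0mx ?mulmx0 ?mulmx1 ?addr0 ?add0r mulmxN.
  by rewrite addrCA addNr addr0.
have E2 : block_mx (1%:M + a *m b) (-a) 0 (1%:M : 'M_1) *m block_mx (1%:M : 'M_n) 0 b 1%:M
   = block_mx 1%:M (-a) b 1%:M.
  rewrite mulmx_block !mul1mx !mul0mx ?mulmx0 ?mulmx1 ?addr0 ?add0r mulNmx.
  by rewrite addrK.
have := congr1 determinant (etrans E1 (esym E2)).
rewrite !det_mulmx !det_lblock !det_ublock !det1 !det_mx11.
by rewrite !mxE /= !mul1r !mulr1 => <-.
Qed.

Local Open Scope R_scope.

Definition dot {n : nat} (x y : 'cV[R]_n) : R := (x^T *m y)%R ord0 ord0.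

Section Dot.
Context {n : nat}.
Implicit Types x y w : 'cV[R]_n.

Lemma dotE x y : dot x y = (\sum_i (x i ord0 * y i ord0))%R.
Proof. by rewrite /dot !mxE; apply: eq_bigr => i _; rewrite mxE. Qed.

Lemma dotC x y : dot x y = dot y x.
Proof. by rewrite !dotE; apply: eq_bigr => i _; rewrite mulrC. Qed.

Lemma dotDr x y w : dot x (y + w)%R = dot x y + dot x w.
Proof. by rewrite /dot mulmxDr mxE. Qed.

Lemma dotDl x y w : dot (y + w)%R x = dot y x + dot w x.
Proof. by rewrite dotC dotDr !(dotC x). Qed.

Lemma dotZr a x y : dot x (a *: y)%R = a * dot x y.
Proof. by rewrite /dot -scalemxAr mxE. Qed.

Lemma dotZl a x y : dot (a *: y)%R x = a * dot y x.
Proof. by rewrite dotC dotZr dotC. Qed.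

Lemma dotNr x y : dot x (- y)%R = - dot x y.
Proof. by rewrite /dot mulmxN mxE. Qed.

Lemma dotNl x y : dot (- y)%R x = - dot y x.
Proof. by rewrite dotC dotNr dotC. Qed.

Lemma dot_mull (A : 'M[R]_n) x y : dot (A *m x)%R y = dot x (A^T *m y)%R.
Proof. by rewrite /dot trmx_mul mulmxA. Qed.

Lemma qformE (A : 'M[R]_n) x : qform A x = dot x (A *m x)%R.
Proof. by rewrite /qform /dot mulmxA. Qed.

Lemma sqnormE x : sqnorm x = dot x x.
Proof. by []. Qed.

Lemma dot_ge0 x : 0 <= dot x x.
Proof.
rewrite dotE; apply: (big_ind (fun v => 0 <= v)) => //.
- by apply: Rle_refl.
- by move=> a b ha hb; apply: Rplus_le_le_0_compat.
- by move=> i _; apply: Rle_0_sqr.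
Qed.

End Dot.

Local Open Scope R_scope.

Definition good {n : nat} (P : 'M[R]_n) :=
  P^T = P /\ (forall x, dot x x <= dot x (P *m x)%R) /\ 0 < \det P.

Section Good.
Context {n : nat}.
Implicit Types x y w : 'cV[R]_n.

Lemma good_unit (P : 'M[R]_n) : good P -> P \in unitmx.
Proof.
move=> [_ [_ hd]]; rewrite unitmxE unitfE; apply/eqP => h.
rewrite h in hd; exact: (Rlt_irrefl 0 hd).
Qed.

Lemma good1 : good (1%:M : 'M[R]_n).
Proof.
split; first exact: trmx1.
split; first by move=> x; rewrite mul1mx; apply: Rle_refl.
rewrite det1; exact: Rlt_0_1.
Qed.

Lemma dot_sq_half x y : dot x y <= (dot x x + dot y y) / 2.
Proof.
have := dot_ge0 (x - y)%R.
rewrite dotDl !dotDr !dotNl !dotNr (dotC y x); lra.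
Qed.

Lemma dot_sq_halfN x y : - dot x y <= (dot x x + dot y y) / 2.
Proof.
have := dot_ge0 (x + y)%R.
rewrite dotDl !dotDr (dotC y x); lra.
Qed.

Lemma inv_facts (P : 'M[R]_n) w : good P ->
  let u := (invmx P *m w)%R in
  (P *m u)%R = w /\ dot u u <= dot w u /\ dot w u <= dot w w /\ 0 <= dot w u.
Proof.
move=> hg u.
have hPu : (P *m u)%R = w by rewrite /u mulKVmx //; exact: good_unit.
case: hg => [hs [hq _]].
have h1 : dot u u <= dot w u.
  by rewrite -{1}hPu dot_mull hs; apply: hq.
have h2 := dot_sq_half w u.
have h3 := dot_ge0 u.
split => //; split => //; split; lra.
Qed.

Lemma mx11_mul (A : 'M[R]_(1,1)) (B : 'M[R]_(1,1)) : (A *m B)%R ord0 ord0 = A ord0 ord0 * B ord0 ord0.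
Proof. by rewrite mxE big_ord1. Qed.

Lemma dot_rank1 x w (c : R) : dot x ((c *: (w *m w^T)) *m x)%R = c * (dot w x * dot w x).
Proof.
rewrite -scalemxAl dotZr; congr (_ * _).
rewrite /dot -[(w *m w^T *m x)%R]mulmxA mulmxA mx11_mul; congr (_ * _); exact: (dotC x w).
Qed.

Lemma rank1_det (P : 'M[R]_n) w (c : R) : good P ->
  \det (P + c *: (w *m w^T))%R = \det P * (1 + c * dot w (invmx P *m w)%R).
Proof.
move=> hg; have [hPu _] := inv_facts P w hg.
set u := (invmx P *m w)%R in hPu *.
have -> : (P + c *: (w *m w^T))%R = (P *m (1%:M + (c *: u) *m w^T))%R.
  by rewrite mulmxDr mulmx1 -scalemxAl -scalemxAr mulmxA hPu.
rewrite det_mulmx det_rank1; congr (_ * (_ + _)).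
by rewrite -scalemxAr mxE.
Qed.

Lemma good_rank1 (P : 'M[R]_n) w (c : R) : good P -> 0 <= c ->
  good (P + c *: (w *m w^T))%R /\
  \det P <= \det (P + c *: (w *m w^T))%R <= \det P * exp (c * dot w w).
Proof.
move=> hg hc.
have [_ [h1 [h2 h3]]] := inv_facts P w hg.
have hdet := rank1_det P w c hg.
have hd0 : 0 < \det P by case: hg => [_ []].
have hcw : 0 <= c * dot w (invmx P *m w)%R by apply: Rmult_le_pos.
have hcw2 : c * dot w (invmx P *m w)%R <= c * dot w w by apply: Rmult_le_compat_l.
have he := exp_ineq1_le (c * dot w w).
case: hg => [hs [hq _]].
split; first split.
- by rewrite linearD /= hs linearZ /= trmx_mul trmxK.
- split.
  + move=> x; rewrite mulmxDl dotDr dot_rank1.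
    have := hq x; have := Rle_0_sqr (dot w x); rewrite /Rsqr => h0 hx.
    have := Rmult_le_pos _ _ hc h0; lra.
  + rewrite hdet; apply: Rmult_lt_0_compat => //; lra.
- rewrite hdet; split.
  + have := Rmult_le_compat_l _ _ _ (Rlt_le _ _ hd0) (_ : 1 <= 1 + c * dot w (invmx P *m w)%R).
    rewrite Rmult_1_r; apply; lra.
  + apply: Rmult_le_compat_l; lra.
Qed.

End Good.

Local Open Scope R_scope.

Lemma sum_le {I : Type} (r : seq I) (F G : I -> R) :
  (forall j, F j <= G j) -> (\sum_(j <- r) F j)%R <= (\sum_(j <- r) G j)%R.
Proof.
move=> h; apply: (big_ind2 (fun a b => a <= b)) => //.
- exact: Rle_refl.
- by move=> a b c d h1 h2; apply: Rplus_le_compat.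
Qed.

Definition Ssum {n : nat} {I : Type} (r : seq I) (f : I -> R) (v : I -> 'cV[R]_n) : 'M[R]_n :=
  (\sum_(j <- r) f j *: (v j *m (v j)^T))%R.

Section Sums.
Context {n : nat} {I : Type}.
Implicit Types (r : seq I) (f : I -> R) (v : I -> 'cV[R]_n).

Lemma Ssum_tr r f v : (Ssum r f v)^T = Ssum r f v.
Proof.
rewrite /Ssum; elim: r => [|j r IH]; first by rewrite !big_nil trmx0.
by rewrite !big_cons linearD /= IH linearZ /= trmx_mul trmxK.
Qed.

Lemma Ssum_dot r f v x :
  dot x (Ssum r f v *m x)%R = (\sum_(j <- r) f j * (dot (v j) x * dot (v j) x))%R.
Proof.
rewrite /Ssum; elim: r => [|j r IH].
  by rewrite !big_nil mul0mx /dot mulmx0 mxE.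
by rewrite !big_cons mulmxDl dotDr dot_rank1 IH.
Qed.

Lemma good_sum r f v (P : 'M[R]_n) : good P -> (forall j, 0 <= f j) ->
  good (P + Ssum r f v)%R /\
  \det P <= \det (P + Ssum r f v)%R <=
    \det P * exp (\sum_(j <- r) f j * dot (v j) (v j))%R.
Proof.
rewrite /Ssum; elim: r P => [|j r IH] P hg hf.
  rewrite !big_nil addr0 exp_0 Rmult_1_r; split => //; split; exact: Rle_refl.
rewrite !big_cons addrA.
have [hg1 [hl1 hu1]] := good_rank1 P (v j) (f j) hg (hf j).
have [hg2 [hl2 hu2]] := IH _ hg1 hf.
split => //.
have hd0 : 0 < \det P by case: hg => [_ []].
split; first exact: (Rle_trans _ _ _ hl1 hl2).
apply: (Rle_trans _ _ _ hu2).
change (f j * dot (v j) (v j) + \sum_(j0 <- r) f j0 * dot (v j0) (v j0))%R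
  with (f j * dot (v j) (v j) + (\sum_(j0 <- r) f j0 * dot (v j0) (v j0))%R).
rewrite exp_plus -Rmult_assoc; apply: Rmult_le_compat_r => //.
exact: Rlt_le (exp_pos _).
Qed.

End Sums.

Local Open Scope R_scope.

Section Quad.
Context {n : nat}.

Lemma mulmxZ (E : 'M[R]_n) (y : 'cV[R]_n) (c : R) : (E *m (c *: y))%R = (c *: (E *m y))%R.
Proof. by rewrite -scalemxAr. Qed.

Lemma qexpE (E : 'M[R]_n) (x y : 'cV[R]_n) (c : R) :
  dot (x + c *: y)%R (E *m (x + c *: y))%R =
  dot x (E *m x)%R + c * dot x (E *m y)%R + c * dot y (E *m x)%R + c * c * dot y (E *m y)%R.
Proof. rewrite mulmxDr mulmxZ !dotDl !dotDr !dotZl !dotZr; ring. Qed.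

Lemma dexpE (x y : 'cV[R]_n) (c : R) :
  dot (x + c *: y)%R (x + c *: y)%R = dot x x + c * dot x y + c * dot y x + c * c * dot y y.
Proof. rewrite !dotDl !dotDr !dotZl !dotZr; ring. Qed.

Lemma quad_diff (Md E : 'M[R]_n) (k : R) (z : 'cV[R]_n) :
  good Md -> good (Md + E)%R -> E^T = E ->
  (forall x, 0 <= dot x (E *m x)%R <= k * dot x x) -> 0 <= k ->
  0 <= dot z (invmx (Md + E) *m z)%R /\ 0 <= dot z (invmx Md *m z)%R /\
  Rabs (dot z (invmx Md *m z)%R - dot z (invmx (Md + E) *m z)%R) <= k * dot z z.
Proof.
move=> hgd hg hE hk k0.
pose u := (invmx (Md + E) *m z)%R.
pose v := (invmx Md *m z)%R.
have [hu [uu1 [uu2 uu3]]] : ((Md + E) *m u)%R = z /\ dot u u <= dot z u /\ dot z u <= dot z z /\ 0 <= dot z u := inv_facts _ z hg.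
have [hv [vv1 [vv2 vv3]]] : (Md *m v)%R = z /\ dot v v <= dot z v /\ dot z v <= dot z z /\ 0 <= dot z v := inv_facts _ z hgd.
rewrite -/u -/v; clearbody u v.
have hM : ((Md + E)^T)%R = (Md + E)%R by rewrite linearD /= hE; case: hgd => ->.
have key : dot z v - dot z u = dot u (E *m v)%R.
  rewrite -{1}hu dot_mull hM mulmxDl dotDr hv (dotC u z); ring.
have sym : dot v (E *m u)%R = dot u (E *m v)%R by rewrite dotC dot_mull hE.
have [p1 p2] := hk (u + (IZR 1) *: v)%R.
have [m1 m2] := hk (u + (IZR (-1)) *: v)%R.
move: p1 p2 m1 m2.
rewrite !qexpE !dexpE sym (dotC v u).
have h1 := dot_sq_half u v.
have h2 := dot_sq_halfN u v.
have h0u := dot_ge0 u. have h0v := dot_ge0 v.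
move=> p1 p2 m1 m2.
split; first lra. split; first lra.
rewrite key.
have H1 : 0 <= k * (dot u u + dot v v - 2 * dot u v) by apply: Rmult_le_pos => //; lra.
have H2 : 0 <= k * (dot u u + dot v v + 2 * dot u v) by apply: Rmult_le_pos => //; lra.
have A : 4 * dot u (E *m v)%R <= k * (2 * dot u u + 2 * dot v v) by nra.
have B : - (4 * dot u (E *m v)%R) <= k * (2 * dot u u + 2 * dot v v) by nra.
have C : k * (2 * dot u u + 2 * dot v v) <= k * (4 * dot z z).
  apply: Rmult_le_compat_l => //; lra.
apply: Rabs_le; lra.
Qed.

End Quad.

Local Open Scope R_scope.

Lemma addRE (x y : R) : (x + y)%R = x + y. Proof. by []. Qed.
Lemma mulRE (x y : R) : (x * y)%R = x * y. Proof. by []. Qed.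
Lemma oppRE (x : R) : (- x)%R = - x. Proof. by []. Qed.
Lemma zeroRE : (0%R : R) = 0. Proof. by []. Qed.
Lemma oneRE : (1%R : R) = 1. Proof. by []. Qed.

Lemma dot_mul_rect {m n : nat} (A : 'M[R]_(m, n)) (x : 'cV[R]_n) (y : 'cV[R]_m) :
  dot (A *m x)%R y = dot x (A^T *m y)%R.
Proof. by rewrite /dot trmx_mul mulmxA. Qed.

Lemma mulmxZr {m n : nat} (A : 'M[R]_(m, n)) (y : 'cV[R]_n) (c : R) :
  (A *m (c *: y))%R = (c *: (A *m y))%R.
Proof. by rewrite -scalemxAr. Qed.

Lemma Rabs_sum {I : Type} (r : seq I) (F : I -> R) :
  Rabs (\sum_(j <- r) F j)%R <= (\sum_(j <- r) Rabs (F j))%R.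
Proof.
elim: r => [|j r IH]; first by rewrite !big_nil Rabs_R0; apply: Rle_refl.
rewrite !big_cons !addRE; apply: (Rle_trans _ _ _ (Rabs_triang _ _)); apply: Rplus_le_compat_l; exact: IH.
Qed.

Lemma sum_ge0 {I : Type} (r : seq I) (P : pred I) (F : I -> R) :
  (forall j, 0 <= F j) -> 0 <= (\sum_(j <- r | P j) F j)%R.
Proof.
move=> h; apply: (big_ind (fun v => 0 <= v)) => //.
- exact: Rle_refl.
- by move=> a b ha hb; apply: Rplus_le_le_0_compat.
Qed.

Lemma entry_sq_le {n : nat} (x : 'cV[R]_n) i : x i ord0 * x i ord0 <= dot x x.
Proof.
rewrite dotE (bigD1 i) //=.
have := sum_ge0 (index_enum 'I_n) (fun j => j != i) (fun j => x j ord0 * x j ord0)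
  (fun j => Rle_0_sqr _).
move=> h; rewrite -{1}(Rplus_0_r (x i ord0 * x i ord0)).
apply: Rplus_le_compat_l; exact: h.
Qed.

Lemma natmul_INR (x : R) (k : nat) : (x *+ k)%R = INR k * x :> R.
Proof.
elim: k => [|k IH]; first by rewrite mulr0n /= Rmult_0_l.
rewrite mulrS IH S_INR addRE; ring.
Qed.

Section Op.
Context {N p : nat} (W : 'M[R]_(N, p)).

Let S := fun v => exists x : 'cV[R]_p, sqnorm x <= 1 /\ v = sqnorm (W *m x)%R.

Lemma S_bound : bound S.
Proof.
exists (\sum_(i < N) (\sum_(j < p) Rabs (W i j)) * (\sum_(j < p) Rabs (W i j)))%R.
move=> v [x [hx ->]]; rewrite sqnormE dotE; apply: sum_le => i.
have hxj : forall j, Rabs (x j ord0) <= 1.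
  move=> j; have := entry_sq_le x j; rewrite -sqnormE => hj.
  apply: Rabs_le; nra.
have ha : Rabs ((W *m x)%R i ord0) <= (\sum_(j < p) Rabs (W i j))%R.
  rewrite mxE; apply: (Rle_trans _ _ _ (Rabs_sum _ _)); apply: sum_le => j.
  change ((W i j * x j ord0)%R) with (W i j * x j ord0).
  rewrite Rabs_mult; have := Rabs_pos (W i j); have := hxj j; nra.
apply: (Rle_trans _ _ _ (Rle_abs _)); rewrite mulRE Rabs_mult.
apply: Rmult_le_compat => //; exact: Rabs_pos.
Qed.

Lemma opnorm_spec : forall x, sqnorm x <= 1 -> sqnorm (W *m x)%R <= opnorm2 W.
Proof.
rewrite /opnorm2; case: excluded_middle_informative => [h|h].
  case: (constructive_indefinite_description _ h) => /= L [hub _] x hx.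
  by apply: hub; exists x.
exfalso; apply: h.
have h0 : sqnorm (0 : 'cV[R]_p) <= 1.
  rewrite sqnormE /dot mulmx0 mxE; exact: Rle_0_1.
have [m hm] := completeness S S_bound (ex_intro _ (sqnorm (W *m 0)%R) (ex_intro _ 0%R (conj h0 erefl))).
by exists m.
Qed.

Lemma opnorm_ge0 : 0 <= opnorm2 W.
Proof.
have h0 : sqnorm (0 : 'cV[R]_p) <= 1.
  rewrite sqnormE /dot mulmx0 mxE; exact: Rle_0_1.
have e : sqnorm (W *m (0 : 'cV[R]_p))%R = 0 by rewrite sqnormE /dot !mulmx0 mxE.
have := opnorm_spec 0%R h0; rewrite e; exact.
Qed.

Lemma sqnormZ {n : nat} (y : 'cV[R]_n) (k : R) : sqnorm (k *: y)%R = k * k * sqnorm y.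
Proof. by rewrite !sqnormE dotZl dotZr Rmult_assoc. Qed.

Lemma opnorm_bound y : sqnorm (W *m y)%R <= opnorm2 W * sqnorm y.
Proof.
set s := sqnorm y; set c := sqnorm (W *m y)%R; set L := opnorm2 W.
have hk : forall k, k * k * s <= 1 -> k * k * c <= L.
  move=> k hk; rewrite /c -sqnormZ -mulmxZr; apply: opnorm_spec.
  by rewrite sqnormZ.
have hs0 : 0 <= s by apply: dot_ge0.
have hc0 : 0 <= c by apply: dot_ge0.
have hL0 : 0 <= L := opnorm_ge0.
case: (Rle_lt_or_eq_dec _ _ hs0) => hs.
  have hq := sqrt_sqrt s hs0.
  have hsq : 0 < sqrt s by apply: sqrt_lt_R0.
  have := hk (/ sqrt s).
  have -> : / sqrt s * / sqrt s = / s by rewrite -Rinv_mult hq.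
  rewrite Rinv_l; last lra.
  move=> /(_ (Rle_refl 1)) h.
  have := Rmult_le_compat_l _ _ _ hs0 h.
  rewrite -Rmult_assoc Rinv_r; lra.
rewrite -hs Rmult_0_r.
case: (Rle_lt_or_eq_dec _ _ hc0) => hc; last by rewrite -hc; apply: Rle_refl.
exfalso.
have hpos : 0 <= (Rabs L + 1) / c.
  apply: Rlt_le; apply: Rdiv_lt_0_compat => //; have := Rabs_pos L; lra.
have := hk (sqrt ((Rabs L + 1) / c)).
rewrite sqrt_sqrt // -hs Rmult_0_r => /(_ Rle_0_1).
rewrite /Rdiv Rmult_assoc Rinv_l; last lra.
have := Rle_abs L; lra.
Qed.

Lemma opnorm_tr x : sqnorm (W^T *m x)%R <= opnorm2 W * sqnorm x.
Proof.
set y := (W^T *m x)%R; set L := opnorm2 W.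
have e1 : sqnorm y = dot x (W *m y)%R by rewrite sqnormE {1}/y dot_mul_rect trmxK.
have hw := opnorm_bound y.
have hL0 : 0 <= L := opnorm_ge0.
have am : forall l, 2 * l * sqnorm y <= l * l * sqnorm x + sqnorm (W *m y)%R.
  move=> l; have := dot_ge0 ((W *m y) + (Ropp l) *: x)%R.
  rewrite dexpE (dotC (W *m y)%R x) -e1 => h.
  rewrite !sqnormE in h *; nra.
fold L in hw.
case: (Rle_lt_or_eq_dec _ _ hL0) => hL.
  have := am L; move=> h.
  apply: (Rmult_le_reg_l L) => //; nra.
rewrite -hL in hw *; rewrite Rmult_0_l.
have hy0 : 0 <= sqnorm y by apply: dot_ge0.
have hx0 : 0 <= sqnorm x by apply: dot_ge0.
case: (Rle_lt_or_eq_dec _ _ hy0) => hy; last by rewrite -hy; apply: Rle_refl.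
exfalso.
set t := sqnorm y / (sqnorm x + 1).
have ht : t * (sqnorm x + 1) = sqnorm y by rewrite /t; field; lra.
have ht0 : 0 < t by apply: Rdiv_lt_0_compat; lra.
have := am t; nra.
Qed.

Lemma col_dot j x : dot (col j W) x = (W^T *m x)%R j ord0.
Proof. by rewrite dotE mxE; apply: eq_bigr => i _; rewrite !mxE. Qed.

Lemma colsum : (\sum_(j < p) dot (col j W) (col j W))%R <= INR N * opnorm2 W.
Proof.
have -> : (\sum_(j < p) dot (col j W) (col j W))%R =
          (\sum_(i < N) dot (col i W^T) (col i W^T))%R.
  under eq_bigr => j _ do rewrite dotE.
  under [X in _ = X]eq_bigr => i _ do rewrite dotE.
  rewrite exchange_big /=; apply: eq_bigr => i _; apply: eq_bigr => j _.
  by rewrite !mxE.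
apply: (Rle_trans _ (\sum_(i < N) opnorm2 W)%R); last first.
  rewrite sumr_const card_ord natmul_INR; exact: Rle_refl.
apply: sum_le => i.
have := opnorm_tr (delta_mx i ord0).
have -> : sqnorm (delta_mx i ord0 : 'cV[R]_N) = 1.
  by rewrite sqnormE /dot trmx_delta mul_delta_mx mxE !eqxx.
rewrite Rmult_1_r colE; apply.
Qed.

End Op.

Local Open Scope R_scope.

Lemma WDW {N p : nat} (W : 'M[R]_(N, p)) (g : 'I_p -> R) :
  (W *m (\matrix_(i, j) (if i == j then g i else 0%R)) *m W^T)%R =
  Ssum (index_enum 'I_p) g (fun j => col j W).
Proof.
have -> : (\matrix_(i, j) (if i == j then g i else 0%R) : 'M[R]_p) = diag_mx (\row_i g i).
  apply/matrixP => i j; rewrite !mxE; case: eqP => [->|]; first by rewrite mulr1n.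
  by move=> _; rewrite mulr0n.
rewrite mul_mx_diag /Ssum; apply/matrixP => i k.
rewrite summxE !mxE; apply: eq_bigr => j _.
rewrite !mxE big_ord1 !mxE.
by rewrite mulrAC mulrC.
Qed.

Lemma Mmat_sum {N p : nat} (W : 'M[R]_(N, p)) (g : 'I_p -> R) (t : R) :
  Mmat W (\matrix_(i, j) (if i == j then g i else 0%R)) t =
  (1%:M + Ssum (index_enum 'I_p) (fun j => / t * g j) (fun j => col j W))%R.
Proof.
rewrite /Mmat WDW /Ssum scaler_sumr; congr (_ + _)%R; apply: eq_bigr => j _.
by rewrite scalerA.
Qed.

Lemma Ssum_split {n : nat} {I : Type} (r : seq I) (f g : I -> R) (v : I -> 'cV[R]_n) :
  Ssum r (fun j => f j + g j) v = (Ssum r f v + Ssum r g v)%R.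
Proof. by rewrite /Ssum -big_split; apply: eq_bigr => j _; rewrite scalerDl. Qed.

Definition LL {N : nat} (a0 b0 : R) (z : 'cV[R]_N) (M : 'M[R]_N) : R :=
  (- / 2) * ln (\det M) + (- ((INR N + a0) / 2)) * ln (b0 + qform (invmx M) z).

Lemma likE {N : nat} (a0 b0 : R) (z : 'cV[R]_N) (M : 'M[R]_N) :
  lik a0 b0 z M = exp (LL a0 b0 z M).
Proof. by rewrite /lik /LL /Rpower exp_plus. Qed.

Lemma ln_le_mono x y : 0 < x -> x <= y -> ln x <= ln y.
Proof.
move=> hx hxy; case: (Rle_or_lt (ln x) (ln y)) => // h.
have := exp_increasing _ _ h; rewrite !exp_ln; lra.
Qed.

Lemma exp_le_mono x y : x <= y -> exp x <= exp y.
Proof.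
move=> h; case: (Rle_lt_or_eq_dec _ _ h) => h'.
  exact: Rlt_le (exp_increasing _ _ h').
by rewrite h'; apply: Rle_refl.
Qed.

Lemma ln_le_sub1 x : 0 < x -> ln x <= x - 1.
Proof. move=> hx; have := exp_ineq1_le (ln x); rewrite exp_ln //; lra. Qed.

Lemma ln_sub_le a b : 0 < a -> 0 < b -> ln a - ln b <= (a - b) / b.
Proof.
move=> ha hb.
have e : exp (ln a - ln b) = a / b.
  by rewrite /Rminus exp_plus exp_Ropp !exp_ln.
have := exp_ineq1_le (ln a - ln b); rewrite e.
have -> : a / b = 1 + (a - b) / b by field; lra.
lra.
Qed.

Lemma div_le_abs x b c : 0 < c -> c <= b -> x / b <= Rabs x / c.
Proof.
move=> hc hb.
have hb0 : 0 < b by lra.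
have hi : / b <= / c by apply: Rinv_le_contravar.
have hib : 0 < / b by apply: Rinv_0_lt_compat.
case: (Rle_or_lt x 0) => hx.
  have : x / b <= 0 by rewrite /Rdiv; nra.
  have : 0 <= Rabs x / c by apply: Rmult_le_pos; [exact: Rabs_pos | apply: Rlt_le; apply: Rinv_0_lt_compat].
  lra.
rewrite Rabs_right; last lra.
rewrite /Rdiv; apply: Rmult_le_compat_l; lra.
Qed.

Lemma ln_diff a b c : 0 < c -> c <= a -> c <= b -> Rabs (ln a - ln b) <= Rabs (a - b) / c.
Proof.
move=> hc ha hb.
have h1 := ln_sub_le a b (Rlt_le_trans _ _ _ hc ha) (Rlt_le_trans _ _ _ hc hb).
have h2 := ln_sub_le b a (Rlt_le_trans _ _ _ hc hb) (Rlt_le_trans _ _ _ hc ha).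
have h3 := div_le_abs (a - b) b c hc hb.
have h4 := div_le_abs (b - a) a c hc ha.
rewrite Rabs_minus_sym in h4.
apply: Rabs_le; lra.
Qed.

Lemma sum_ge0u {I : Type} (r : seq I) (F : I -> R) :
  (forall j, 0 <= F j) -> 0 <= (\sum_(j <- r) F j)%R.
Proof.
move=> h; apply: (big_ind (fun v => 0 <= v)) => //.
- exact: Rle_refl.
- by move=> a b ha hb; apply: Rplus_le_le_0_compat.
Qed.

Lemma per_t {N p : nat} (W : 'M[R]_(N, p)) (z : 'cV[R]_N) (a0 b0 delta xi xis : R)
  (eta : 'I_p -> R) (t : R) :
  0 < a0 -> 0 < b0 -> 0 < delta -> 0 < t -> / t <= ximax_inv xi xis ->
  (forall j, 0 < eta j) ->
  Rabs (LL a0 b0 z (Mmat W (Dmat eta) t) -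
        LL a0 b0 z (Mmat W (Dmat_delta delta xi xis eta) t))
  <= (INR N * (opnorm2 W * delta) + (INR N + a0) * (opnorm2 W * delta) * dot z z / b0) / 2.
Proof.
move=> ha0 hb0 hd ht htx heta.
set r := index_enum 'I_p.
set cols := fun j => col j W.
pose gk j := if Rlt_dec delta (ximax_inv xi xis * / eta j) then / eta j else 0.
pose gd j := if Rlt_dec delta (ximax_inv xi xis * / eta j) then 0 else / eta j.
have eD : Dmat_delta delta xi xis eta = \matrix_(i, j) (if i == j then gk i else 0%R) by [].
have eM : Dmat eta = \matrix_(i, j) (if i == j then / eta i else 0%R) by [].
set Md := Mmat W (Dmat_delta delta xi xis eta) t.
set M := Mmat W (Dmat eta) t.
set E := Ssum r (fun j => / t * gd j) cols.
have eMd : Md = (1%:M + Ssum r (fun j => / t * gk j) cols)%R by rewrite /Md eD Mmat_sum.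
have es : forall j, / t * / eta j = / t * gk j + / t * gd j.
  by move=> j; rewrite /gk /gd; case: Rlt_dec => h /=; ring.
have eMM : M = (Md + E)%R.
  rewrite /M eM Mmat_sum eMd /E -addrA -Ssum_split; congr (_ + _)%R.
  rewrite /Ssum; apply: eq_bigr => j _; congr (_ *: _)%R.
  exact: es.
have hti : 0 < / t by apply: Rinv_0_lt_compat.
have hei : forall j, 0 < / eta j by move=> j; apply: Rinv_0_lt_compat.
have hgk : forall j, 0 <= / t * gk j.
  move=> j; rewrite /gk; case: Rlt_dec => h /=; have := hei j; nra.
have hgd : forall j, 0 <= / t * gd j.
  move=> j; rewrite /gd; case: Rlt_dec => h /=; have := hei j; nra.
have hgd_le : forall j, / t * gd j <= delta.
  move=> j; rewrite /gd; case: Rlt_dec => h /=; first lra.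
  have := Rmult_le_compat_r _ _ _ (Rlt_le _ _ (hei j)) htx; lra.
have hgMd := proj1 (good_sum r (fun j => / t * gk j) cols 1%:M%R good1 hgk).
rewrite -eMd in hgMd.
have [hgM [hdl hdu]] := good_sum r (fun j => / t * gd j) cols Md hgMd hgd.
rewrite -/E -eMM in hgM hdl hdu.
set kap := opnorm2 W * delta.
have hop0 := opnorm_ge0 W.
have hkap0 : 0 <= kap by rewrite /kap; nra.
have hsum : (\sum_(j <- r) / t * gd j * dot (cols j) (cols j))%R <= INR N * kap.
  apply: (Rle_trans _ (\sum_(j <- r) delta * dot (cols j) (cols j))%R).
    apply: sum_le => j; apply: Rmult_le_compat_r; [exact: dot_ge0 | exact: hgd_le].
  rewrite -mulr_sumr mulRE.
  apply: (Rle_trans _ (delta * (INR N * opnorm2 W))).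
    apply: Rmult_le_compat_l; [lra | exact: (colsum W)].
  rewrite /kap; lra.
have hdMd : 0 < \det Md by case: hgMd => [_ []].
have hdM : 0 < \det M by case: hgM => [_ []].
move: hdu; set S := (\sum_(j <- r) _)%R => hdu.
have hS : S <= INR N * kap := Rle_trans _ _ _ (Rle_refl S) hsum.
have ldet : 0 <= ln (\det M) - ln (\det Md) <= INR N * kap.
  split; first by have := ln_le_mono _ _ hdMd hdl; lra.
  have := ln_le_mono _ _ hdM hdu.
  rewrite ln_mult // ?ln_exp; last exact: exp_pos.
  lra.
have hE : E^T = E by apply: Ssum_tr.
have hEq : forall x, 0 <= dot x (E *m x)%R <= kap * dot x x.
  move=> x; rewrite /E Ssum_dot; split.
    apply: sum_ge0u => j; apply: Rmult_le_pos => //; exact: Rle_0_sqr.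
  apply: (Rle_trans _ (\sum_(j <- r) delta * (dot (cols j) x * dot (cols j) x))%R).
    apply: sum_le => j; apply: Rmult_le_compat_r; [exact: Rle_0_sqr | exact: hgd_le].
  rewrite -mulr_sumr mulRE.
  have -> : (\sum_(j <- r) dot (cols j) x * dot (cols j) x)%R = sqnorm (W^T *m x)%R.
    rewrite sqnormE dotE; apply: eq_bigr => j _; rewrite /cols col_dot //.
  apply: (Rle_trans _ _ _ (Rmult_le_compat_l _ _ _ (Rlt_le _ _ hd) (opnorm_tr W x))).
  rewrite /kap sqnormE; right; ring.
have hgM' : good (Md + E)%R by rewrite -eMM.
have [hQ [hQd hQdiff]] := quad_diff Md E kap z hgMd hgM' hE hEq hkap0.
rewrite -eMM in hQ hQdiff.
set Q := dot z (invmx M *m z)%R in hQ hQdiff.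
set Qd := dot z (invmx Md *m z)%R in hQd hQdiff.
have lq : Rabs (ln (b0 + Q) - ln (b0 + Qd)) <= kap * dot z z / b0.
  apply: (Rle_trans _ _ _ (ln_diff _ _ _ hb0 _ _)); try lra.
  have -> : b0 + Q - (b0 + Qd) = - (Qd - Q) by ring.
  rewrite Rabs_Ropp /Rdiv; apply: Rmult_le_compat_r => //.
  by apply: Rlt_le; apply: Rinv_0_lt_compat.
rewrite /LL !qformE -/Q -/Qd.
set X := ln (\det M) - ln (\det Md) in ldet.
set Y := ln (b0 + Q) - ln (b0 + Qd) in lq.
set c := (INR N + a0) / 2.
have hc : 0 <= c by rewrite /c; have := pos_INR N; lra.
have e : - / 2 * ln (\det M) + - c * ln (b0 + Q) -
         (- / 2 * ln (\det Md) + - c * ln (b0 + Qd)) = - / 2 * X - c * Y.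
  by rewrite /X /Y; ring.
rewrite e.
set B := kap * dot z z / b0 in lq.
have y1 : Y <= B := Rle_trans _ _ _ (Rle_abs Y) lq.
have y2 : - Y <= B.
  apply: (Rle_trans _ (Rabs (- Y))); [exact: Rle_abs | rewrite Rabs_Ropp; exact: lq].
have c1 := Rmult_le_compat_l _ _ _ hc y1.
have c2 := Rmult_le_compat_l _ _ _ hc y2.
have eB : (INR N * kap + (INR N + a0) * kap * dot z z / b0) / 2 = / 2 * (INR N * kap) + c * B.
  rewrite /B /c; field; lra.
rewrite eB.
case: ldet => x1 x2.
apply: Rabs_le; split; nra.
Qed.

Local Open Scope R_scope.

Lemma min_aux x y : y <= x ->
  0 <= Rmin 1 (exp x) - Rmin 1 (exp y) <= exp (x - y) - 1.
Proof.
move=> hxy.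
have ea : exp x = exp y * exp (x - y) by rewrite -exp_plus; congr exp; ring.
have he : 1 <= exp (x - y) by have := exp_ineq1_le (x - y); lra.
have hb := exp_pos y.
rewrite ea; move: hb he; move: (exp y) (exp (x - y)) => b e hb he.
rewrite /Rmin; case: Rle_dec => h1 /=; case: Rle_dec => h2 /=; split; nra.
Qed.

Lemma min_exp x y : Rabs (Rmin 1 (exp x) - Rmin 1 (exp y)) <= exp (Rabs (x - y)) - 1.
Proof.
case: (Rle_or_lt y x) => h.
  have [h1 h2] := min_aux x y h.
  rewrite Rabs_right; last lra.
  by rewrite Rabs_right; last lra.
have [h1 h2] := min_aux y x (Rlt_le _ _ h).
rewrite Rabs_minus_sym Rabs_right; last lra.
by rewrite Rabs_minus_sym Rabs_right; last lra.
Qed.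

Lemma exp_ratio a b K : 0 < K -> exp a / exp b * K = exp (a - b + ln K).
Proof.
move=> hK; rewrite /Rminus !exp_plus exp_Ropp exp_ln //.
Qed.

Lemma pi_pos t : 0 < t -> 0 < pi_xi t.
Proof.
move=> ht; rewrite /pi_xi; apply: Rmult_lt_0_compat; apply: Rinv_0_lt_compat.
  exact: sqrt_lt_R0.
lra.
Qed.

Theorem mainTheorem3 (N p : nat) (W : 'M[R]_(N, p)) (z : 'cV[R]_N)
  (a0 b0 delta : R) :
  (0 < N)%N -> (0 < p)%N -> 0 < a0 -> 0 < b0 -> 0 < delta ->
  forall (xi xis : R) (eta : 'I_p -> R),
  0 < xi -> 0 < xis -> (forall j, 0 < eta j) ->
  Rabs (alpha_eta a0 b0 W z eta xi xis - alpha_eta_eps a0 b0 delta W z eta xi xis)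
   <= exp ((INR N + (INR N + a0) * (sqnorm z / b0)) * opnorm2 W * delta) - 1.
Proof.
move=> _ _ ha0 hb0 hd xi xis eta hxi hxis heta.
rewrite /alpha_eta /alpha_eta_eps /q_eta /q_eta_delta /q_of !likE.
set K := pi_xi xis * xis / (pi_xi xi * xi).
have hK : 0 < K.
  rewrite /K /Rdiv; apply: Rmult_lt_0_compat.
    apply: Rmult_lt_0_compat => //; exact: pi_pos.
  apply: Rinv_0_lt_compat; apply: Rmult_lt_0_compat => //; exact: pi_pos.
rewrite !exp_ratio //.
apply: (Rle_trans _ _ _ (min_exp _ _)).
apply: Rplus_le_compat_r; apply: exp_le_mono.
have h1 := per_t W z a0 b0 delta xi xis eta xis ha0 hb0 hd hxis (Rmax_r _ _) heta.
have h2 := per_t W z a0 b0 delta xi xis eta xi ha0 hb0 hd hxi (Rmax_l _ _) heta.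
set A1 := LL a0 b0 z (Mmat W (Dmat eta) xis) in h1 *.
set B1 := LL a0 b0 z (Mmat W (Dmat_delta delta xi xis eta) xis) in h1 *.
set A2 := LL a0 b0 z (Mmat W (Dmat eta) xi) in h2 *.
set B2 := LL a0 b0 z (Mmat W (Dmat_delta delta xi xis eta) xi) in h2 *.
have e : A1 - A2 + ln K - (B1 - B2 + ln K) = (A1 - B1) - (A2 - B2) by ring.
rewrite e.
apply: (Rle_trans _ _ _ (Rabs_triang _ _)); rewrite Rabs_Ropp.
have e2 : (INR N + (INR N + a0) * (sqnorm z / b0)) * opnorm2 W * delta =
  (INR N * (opnorm2 W * delta) + (INR N + a0) * (opnorm2 W * delta) * dot z z / b0) / 2 +
  (INR N * (opnorm2 W * delta) + (INR N + a0) * (opnorm2 W * delta) * dot z z / b0) / 2.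
  by rewrite sqnormE; field; lra.
rewrite e2; lra.
Qed.
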